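(* Let $T$ be a light tournament and let $z$ be a vertex of $T$ of minimum in-degree. Then the subtournament $T[V_2(z)]$ induced by the in-neighborhood of $z$ is $\mathcal{T}_5$-free.
   Context: A triangle of a tournament is a set of three vertices inducing a directed 3-cycle. An unordered pair $ab$ of vertices is a diagonal if there exist vertices $u,v$ with $\{u,v,a\}$ and $\{u,v,b\}$ both triangles. A triangle is heavy if at least two of its pairs are diagonals; a tournament is light if it has no heavy triangle. $V_2(z)=\{v: (v,z)\in A(T)\}$. A feedback vertex set of a tournament is a vertex set whose removal leaves an acyclic tournament. $\mathcal{T}_5$ is the set of tournaments on 5 vertices whose minimum feedback vertex set has size 2; a tournament is $\mathcal{T}_5$-free if it has no subtournament isomorphic to a member of $\mathcal{T}_5$. *)

(* Defs.v *)
From mathcomp Require Import all_boot.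
Set Implicit Arguments. Unset Strict Implicit. Unset Printing Implicit Defensive.

(* A tournament on the finite vertex type T, with arc relation A (A u v : u -> v). *)
Definition is_tournament (T : finType) (A : rel T) : Prop :=
  (forall u, ~~ A u u) /\
  (forall u v, u != v -> (A u v || A v u) && ~~ (A u v && A v u)).

Definition triangle (T : finType) (A : rel T) (a b c : T) : bool :=
  (A a b && A b c && A c a) || (A b a && A c b && A a c).

Definition diagonal (T : finType) (A : rel T) (a b : T) : bool :=
  (a != b) && [exists u, exists v, triangle A u v a && triangle A u v b].

Definition heavy (T : finType) (A : rel T) (a b c : T) : bool :=
  triangle A a b c &&
  ((diagonal A a b && diagonal A b c) || (diagonal A b c && diagonal A c a)
   || (diagonal A c a && diagonal A a b)).

Definition light (T : finType) (A : rel T) : Prop :=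
  forall a b c, ~~ heavy A a b c.

Definition indeg (T : finType) (A : rel T) (v : T) : nat := #|[set u | A u v]|.

Definition V2 (T : finType) (A : rel T) (z : T) : {set T} := [set v | A v z].

Definition acyclic_on (T : finType) (A : rel T) (W : {set T}) : bool :=
  let e := [rel u v | [&& u \in W, v \in W & A u v]] in
  ~~ [exists x in W, exists y in W, A x y && connect e y x].

Definition is_fvs (T : finType) (A : rel T) (S F : {set T}) : bool :=
  (F \subset S) && acyclic_on A (S :\: F).

Definition min_fvs_is_two (T : finType) (A : rel T) (S : {set T}) : Prop :=
  (exists F : {set T}, is_fvs A S F /\ #|F| = 2) /\
  (forall F : {set T}, is_fvs A S F -> 2 <= #|F|).

Definition T5_free (T : finType) (A : rel T) (X : {set T}) : Prop :=
  forall S : {set T}, S \subset X -> #|S| = 5 -> ~ min_fvs_is_two A S.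

(* Main.v *)
Require Import Defs.
From mathcomp Require Import all_boot.
Set Implicit Arguments. Unset Strict Implicit.

Section Aux.
Variables (T : finType) (A : rel T).
Hypothesis hT : is_tournament A.

Lemma t_irr u : ~~ A u u.
Proof. by case: hT. Qed.

Lemma t_neq u v : A u v -> u != v.
Proof. by move=> h; apply/eqP => e; subst; move: (t_irr v); rewrite h. Qed.

Lemma t_anti u v : A u v -> A v u -> False.
Proof.
move=> h1 h2; case: hT => _ H; move/andP: (H u v (t_neq h1)) => [_ H2].
by move: H2; rewrite h1 h2.
Qed.

Lemma t_tot u v : u != v -> ~~ A u v -> A v u.
Proof.
move=> ne h; case: hT => _ H; move/andP: (H u v ne) => [H1 _].
by move: H1; rewrite (negbTE h).
Qed.

Lemma diag_sym a b : diagonal A a b -> diagonal A b a.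
Proof.
case/andP=> ne /existsP [u /existsP [v /andP [h1 h2]]].
apply/andP; split; first by rewrite eq_sym.
by apply/existsP; exists u; apply/existsP; exists v; rewrite h1 h2.
Qed.

Lemma mk_diag a b u v : a != b -> triangle A u v a -> triangle A u v b ->
  diagonal A a b.
Proof.
move=> ne h1 h2; apply/andP; split=> //.
by apply/existsP; exists u; apply/existsP; exists v; rewrite h1 h2.
Qed.

Lemma tri1 a b c : A a b -> A b c -> A c a -> triangle A a b c.
Proof. by move=> h1 h2 h3; rewrite /triangle h1 h2 h3. Qed.

Variable z : T.
Hypothesis hl : light A.
Hypothesis hz : forall w : T, indeg A z <= indeg A w.

Lemma K0 x : A x z -> exists y, A z y && A y x.
Proof.
move=> hx.
case: (boolP [exists y, A z y && A y x]) => [/existsP //|hn].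
exfalso.
have sub : [set u | A u x] \subset [set u | A u z] :\ x.
  apply/subsetP => u; rewrite inE => hu; rewrite !inE (t_neq hu) /=.
  have unz : u != z.
    by apply/eqP => e; subst; apply: (t_anti hu hx).
  case: (boolP (A u z)) => // hn2.
  have := t_tot unz hn2 => hzu.
  by move: hn; rewrite negb_exists => /forallP /(_ u); rewrite hzu hu.
have c1 := subset_leq_card sub.
have c2 := hz x.
have xin : x \in [set u | A u z] by rewrite inE.
move: c1 c2; rewrite /indeg (cardsD1 x [set u | A u z]) xin /=.
rewrite -/(indeg A x) => c1 c2.
have := leq_trans c2 c1.
by rewrite /indeg ltnn.
Qed.

Lemma F1 y a b : A z y -> A y a -> A y b -> A a z -> A b z -> a != b ->
  diagonal A a b.
Proof.
move=> h1 h2 h3 h4 h5 ne; apply: (mk_diag (u:=z) (v:=y)) => //;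
  apply: tri1 => //.
Qed.

Lemma F2 y a b : A z y -> A y a -> A a b -> A b y -> A a z -> A b z ->
  diagonal A z b.
Proof.
move=> h1 h2 h3 h4 h5 h6.
apply: (mk_diag (u:=y) (v:=a)).
- by rewrite eq_sym; apply: t_neq.
- by apply: tri1.
- by apply: tri1.
Qed.

Lemma F3 y y' q : A z y -> A z y' -> A y y' -> A y' q -> A q y -> A q z ->
  diagonal A z y.
Proof.
move=> h1 h2 h3 h4 h5 h6.
apply: (mk_diag (u:=y') (v:=q)).
- by apply: t_neq.
- by apply: tri1.
- by apply: tri1.
Qed.

Lemma no_heavy a b c : triangle A a b c -> diagonal A a b -> diagonal A b c ->
  False.
Proof. by move=> h1 h2 h3; move: (hl a b c); rewrite /heavy h1 h2 h3. Qed.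

Lemma heavy_zya y a : A z y -> A y a -> A a z -> diagonal A z y ->
  diagonal A z a -> False.
Proof.
move=> h1 h2 h3 d1 d2; move: (hl z y a).
by rewrite /heavy (tri1 h1 h2 h3) d1 (diag_sym d2) !orbT.
Qed.

Lemma Z1 p q : A p z -> A q z -> A p q -> diagonal A p q \/ diagonal A z q.
Proof.
move=> hp hq hpq; have [y /andP [hzy hyp]] := K0 hp.
case: (boolP (A y q)) => hyq.
- by left; apply: (F1 hzy hyp hyq hp hq (t_neq hpq)).
- right; have hqy : A q y.
    apply: t_tot => //; apply/eqP => e; subst; by apply: (t_anti hq hzy).
  exact: (F2 hzy hyp hpq hqy hp hq).
Qed.

Lemma ClC p q : A p z -> A q z -> p != q -> diagonal A z p -> diagonal A z q ->
  diagonal A p q.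
Proof.
move=> hp hq ne dp dq.
have [yp /andP [hzp hyp]] := K0 hp.
have [yq /andP [hzq hyq]] := K0 hq.
case: (boolP (A yp q)) => h1; first by apply: (F1 hzp hyp h1 hp hq ne).
case: (boolP (A yq p)) => h2.
  by apply: diag_sym; apply: (F1 hzq hyq h2 hq hp); rewrite eq_sym.
have ypq : yp != q by apply/eqP => e; subst; apply: (t_anti hq hzp).
have yqp : yq != p by apply/eqP => e; subst; apply: (t_anti hp hzq).
have hqyp := t_tot ypq h1.
have hpyq := t_tot yqp h2.
have ne2 : yp != yq by apply/eqP => e; subst; apply: (t_anti hyp hpyq).
case: (boolP (A yp yq)) => h3.
- exfalso; apply: (heavy_zya hzp hyp hp _ dp).
  exact: (F3 hzp hzq h3 hyq hqyp hq).
- have h4 := t_tot ne2 h3.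
  exfalso; apply: (heavy_zya hzq hyq hq _ dq).
  exact: (F3 hzq hzp h4 hyp hpyq hp).
Qed.

Lemma noTri a b c : A a z -> A b z -> A c z -> A a b -> A b c -> A c a -> False.
Proof.
move=> ha hb hc hab hbc hca.
have tr : triangle A a b c by apply: tri1.
have tr2 : triangle A b c a by apply: tri1.
have tr3 : triangle A c a b by apply: tri1.
have nab := t_neq hab; have nbc := t_neq hbc; have nca := t_neq hca.
have D1 := Z1 ha hb hab; have D2 := Z1 hb hc hbc; have D3 := Z1 hc ha hca.
have C1 := ClC ha hb nab; have C2 := ClC hb hc nbc; have C3 := ClC hc ha nca.
have H1 := no_heavy tr; have H2 := no_heavy tr2; have H3 := no_heavy tr3.
tauto.
Qed.

Lemma trans_in u v w : A u z -> A v z -> A w z -> A u v -> A v w -> A u w.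
Proof.
move=> hu hv hw h1 h2.
case: (boolP (A u w)) => // h.
have ne : u != w by apply/eqP => e; subst; apply: (t_anti h1 h2).
exfalso; apply: (noTri hu hv hw h1 h2 (t_tot ne h)).
Qed.

Lemma acyc (W : {set T}) : W \subset V2 A z -> acyclic_on A W.
Proof.
move=> sW; rewrite /acyclic_on; apply/negP.
case/exists_inP => x xW /exists_inP [y yW /andP [hxy]].
move/connectP => [p pp elast].
have inz w : w \in W -> A w z by move=> wW; move/subsetP: sW => /(_ w wW); rewrite inE.
suff key : forall y0, y0 \in W -> path [rel u v | [&& u \in W, v \in W & A u v]] y0 p ->
   (y0 = last y0 p) \/ A y0 (last y0 p).
  case: (key y yW pp); rewrite -elast.
  - by move=> e; rewrite e in hxy; move: (t_irr x); rewrite hxy.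
  - by move=> h; apply: (t_anti hxy h).
have lastW : forall y1 q, y1 \in W -> path [rel u v | [&& u \in W, v \in W & A u v]] y1 q -> last y1 q \in W.
  move=> y1 q; elim: q y1 => [|b q IH] y1 //= y1W /andP [/and3P [_ bW _] qq].
  exact: IH.
elim: p {pp elast} => [|a p IH] y0 y0W /=; first by left.
case/andP=> /and3P [_ aW h0] pp.
case: (IH a aW pp) => [<-|h]; first by right.
case: (boolP (y0 == last a p)) => [/eqP|ne]; first by left.
right; exact: (trans_in (inz _ y0W) (inz _ aW) (inz _ (lastW _ _ aW pp)) h0 h).
Qed.
End Aux.

Theorem lemma6 (T : finType) (A : rel T) (hT : is_tournament A) (hl : light A)
  (z : T) (hz : forall w : T, indeg A z <= indeg A w) :
  T5_free A (V2 A z).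
Proof.
move=> S sS _ [_ H].
have : is_fvs A S set0.
  rewrite /is_fvs sub0set /= setD0.
  exact: (acyc hT hl hz sS).
by move/H; rewrite cards0.
Qed.
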